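(* For every infinite set $\Lambda\subseteq\mathbb{N}$ there exists an increasing sequence $(N_t)_{t\ge0}$ of elements of $\Lambda$ such that for all $n\ge0$, $c\in\{0,1\}$ and $k\in\mathbb{Z}$: (1) the limit $\mu_n(c,k)=\lim_{t\to\infty}\dfrac{C_n\big(c,k,(2/3)^nN_t\big)}{(2/3)^nN_t}$ exists; (2) $\mu_n(c,k+2^n)=\mu_n(c,k)$; (3) letting $q_n$ be an integer with $3q_n\equiv1\pmod{2^{n+1}}$, \[ \tfrac32\,\mu_n(c,k)=\mu_{n+1}(c,2q_nk)+\mu_{n+1}(\bar c,2q_nk-q_n)+\mu_{n+1}(c,2q_nk-2q_n), \] where $\bar c=1-c$; (4) $\mu_n(0,k)+\mu_n(1,k)=2^{-n}$.
   Context: The Thue--Morse word in base $3/2$ is the unique binary sequence $\mathbf{t}_{3/2}=(t_i)_{i\ge0}$ with $t_0=0$, $t_{3n}=t_{3n+1}=t_{2n}$ and $t_{3n+2}=1-t_{2n+1}$ for all $n\ge0$ (equivalently, $t_i$ is the digit sum modulo $2$ of the base-$3/2$ expansion of $i$). For $n\ge0$, $c\in\{0,1\}$, $k\in\mathbb{Z}$ and a real number $\alpha\ge0$, $C_n(c,k,\alpha)=\#\{i\in\mathbb{Z}: 0\le i<\alpha,\ t_i=c,\ i\equiv k\pmod{2^n}\}$. *)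

(* Defs.v *)
From HB Require Import structures.
From mathcomp Require Import all_boot all_order all_algebra.
From mathcomp Require Import all_classical all_reals all_analysis.
Set Implicit Arguments. Unset Strict Implicit. Unset Printing Implicit Defensive.
Import Order.TTheory GRing.Theory Num.Theory.
Local Open Scope ring_scope.

(* Thue--Morse word in base 3/2, bits as booleans (false = 0, true = 1):
   t_0 = 0, t_{3n} = t_{3n+1} = t_{2n}, t_{3n+2} = 1 - t_{2n+1}.
   Computed with fuel; for i >= 1 the recursive index is < i, so fuel i.+1
   suffices. *)
Fixpoint tm_aux (fuel i : nat) : bool :=
  match fuel with
  | 0 => false
  | f.+1 =>
    if i == 0%N then false
    else if (i %% 3 == 2)%N then ~~ tm_aux f (2 * (i %/ 3)).+1
    else tm_aux f (2 * (i %/ 3))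
  end.

Definition tm (i : nat) : bool := tm_aux i.+1 i.

(* C_n(c,k,alpha) = #{ i in Z : 0 <= i < alpha, t_i = c, i = k mod 2^n }.
   Integers 0 <= i < alpha all lie in [0, truncn alpha], so we count there. *)
Definition Ccount {R : realType} (n : nat) (c : bool) (k : int) (alpha : R) : nat :=
  count (fun i : nat => [&& (i%:R < alpha), tm i == c &
                            (i%:Z == k %[mod (2 ^ n)%:Z])%Z])
        (iota 0 (Num.truncn alpha).+1).

(* Main.v *)
Require Import Defs.
Set Warnings "-all".
From HB Require Import structures.
From mathcomp Require Import all_boot all_order all_algebra.
From mathcomp Require Import all_classical all_reals all_analysis.
Import Order.TTheory GRing.Theory Num.Theory.
Import numFieldNormedType.Exports.
Local Open Scope ring_scope.
Local Open Scope classical_set_scope.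
From mathcomp Require Import zify ring lra.

Lemma tm_aux_fuel f g i : (i < f)%N -> (i < g)%N -> tm_aux f i = tm_aux g i.
Proof.
elim: f g i => [|f IH] [|g] i //= hf hg.
case: eqP => // /eqP i0.
case: ifP => h2.
  by rewrite (IH g) //; lia.
by rewrite (IH g) //; lia.
Qed.

Lemma tm_auxS f i : tm_aux f.+1 i = if i == 0%N then false
    else if (i %% 3 == 2)%N then ~~ tm_aux f (2 * (i %/ 3)).+1
    else tm_aux f (2 * (i %/ 3)).
Proof. by []. Qed.

Lemma tm0 : tm 0 = false. Proof. by []. Qed.

Lemma tm3 m : tm (3 * m) = tm (2 * m).
Proof.
case: m => [|m] //.
rewrite /tm tm_auxS.
have -> : (3 * m.+1 == 0)%N = false by lia.
have -> : (3 * m.+1 %% 3 == 2)%N = false by lia.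
have -> : (3 * m.+1 %/ 3 = m.+1)%N by lia.
apply: tm_aux_fuel; lia.
Qed.

Lemma tm31 m : tm (3 * m + 1) = tm (2 * m).
Proof.
rewrite /tm tm_auxS.
have -> : (3 * m + 1 == 0)%N = false by lia.
have -> : ((3 * m + 1) %% 3 == 2)%N = false by lia.
have -> : ((3 * m + 1) %/ 3 = m)%N by lia.
apply: tm_aux_fuel; lia.
Qed.

Lemma tm32 m : tm (3 * m + 2) = ~~ tm (2 * m + 1).
Proof.
rewrite /tm tm_auxS.
have -> : (3 * m + 2 == 0)%N = false by lia.
have -> : ((3 * m + 2) %% 3 == 2)%N = true by lia.
have -> : ((3 * m + 2) %/ 3 = m)%N by lia.
congr (~~ _); rewrite addn1; apply: tm_aux_fuel; lia.
Qed.

Section Cnt.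
Variable R : realType.

Lemma ex_m (a : R) : 0 <= a -> exists m : nat, forall i : nat, (i%:R < a) = (i < m)%N.
Proof.
move=> a0; have /andP[h1 h2] := truncn_itv a0.
set T := Num.truncn a in h1 h2 *.
have [e|ne] := eqVneq a T%:R.
  by exists T => i; rewrite e ltr_nat.
exists T.+1 => i; apply/idP/idP.
  by move=> h; rewrite -(ltr_nat R); exact: lt_trans h h2.
rewrite ltnS leq_eqVlt => /orP[/eqP->|].
  by rewrite lt_neqAle eq_sym ne h1.
by rewrite -(ltr_nat R) => h; apply: lt_le_trans h h1.
Qed.

Lemma m_bounds (a : R) m : 0 <= a -> (forall i : nat, (i%:R < a) = (i < m)%N) ->
  a <= m%:R /\ m%:R < a + 1.
Proof.
move=> a0 H; split; first by rewrite leNgt H ltnn.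
case: m H => [|m] H; first by rewrite (le_lt_trans a0) // ltrDl.
have := H m; rewrite ltnS leqnn => h; by rewrite -addn1 natrD ltrD2r.
Qed.
End Cnt.

Definition Pr n c (k : int) := fun i : nat => (tm i == c) && (i%:Z == k %[mod (2 ^ n)%:Z])%Z.

Lemma Ccount_m {R : realType} n c k (a : R) m : 0 <= a ->
  (forall i : nat, (i%:R < a) = (i < m)%N) -> Ccount n c k a = count (Pr n c k) (iota 0 m).
Proof.
move=> a0 H.
have hm : (m <= (Num.truncn a).+1)%N.
  by rewrite leqNgt -H -real_leNgt ?num_real // ltW // truncnS_gt.
rewrite /Ccount -(subnKC hm) iotaD count_cat add0n.
rewrite (@eq_in_count _ _ pred0 (iota m _)); last first.
  by move=> i; rewrite mem_iota => /andP[h _] /=; rewrite H ltnNge h.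
rewrite count_pred0 addn0; apply: eq_in_count => i; rewrite mem_iota add0n => /andP[_ h].
by rewrite /= H h.
Qed.

Lemma congA (P q k a m : int) : (2 * P %| 3*q - 1)%Z ->
  (P %| (3* m + a) - k)%Z = (2 * P %| 2* m - 2*q*(k - a))%Z.
Proof.
move=> /dvdzP[u hu]; apply/dvdzP/dvdzP => -[x hx].
  exists (q*x - 2* m*u).
  have -> : k - a = 3 * m - x * P by lia.
  have e : 3 * q = 1 + u * (2 * P) by lia.
  transitivity (2 * m - 2 * m * (3 * q) + 2 * q * x * P); first by ring.
  rewrite e; ring.
have hx' : m - q * (k - a) = x * P.
  apply: (@mulfI _ 2) => //; rewrite mulrBr; lia.
exists (2*u*(k-a) + 3*x).
have e : 3 * q = 1 + u * (2 * P) by lia.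
have -> : m = x * P + q * (k - a) by lia.
transitivity (3 * q * (k - a) + 3 * x * P - (k - a)); first by ring.
rewrite e; ring.
Qed.

Lemma hq_dvd n (q : int) : (3 * q == 1 %[mod (2 ^ n.+1)%:Z])%Z ->
  (2 * (2 ^ n)%:Z %| 3 * q - 1)%Z.
Proof. by rewrite eqz_mod_dvd expnS PoszM. Qed.

Lemma modE (i : nat) k n : (i%:Z == k %[mod (2 ^ n)%:Z])%Z = ((2 ^ n)%:Z %| i%:Z - k)%Z.
Proof. by rewrite eqz_mod_dvd. Qed.

Section Blocks.
Variables (n : nat) (q k : int) (c : bool).
Hypothesis hq : (3 * q == 1 %[mod (2 ^ n.+1)%:Z])%Z.
Let P := ((2 ^ n)%:Z).
Let hP : (2 ^ n.+1)%:Z = 2 * P. Proof. by rewrite /P expnS PoszM. Qed.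
Let hd := @hq_dvd n q hq.

Lemma L1 m : Pr n c k (3 * m) = Pr n.+1 c (2 * q * k) (2 * m).
Proof.
rewrite /Pr tm3 !modE hP; congr (_ && _).
have := congA _ _ k 0 m hd; rewrite addr0 subr0 -/P PoszM PoszM => ->; congr (_ %| _)%Z; ring.
Qed.

Lemma L2 m : Pr n c k (3 * m + 1) = Pr n.+1 c (2 * q * k - 2 * q) (2 * m).
Proof.
rewrite /Pr tm31 !modE hP; congr (_ && _).
have := congA _ _ k 1 m hd; rewrite -/P PoszD PoszM PoszM => ->; congr (_ %| _)%Z; ring.
Qed.

Lemma L3 m : Pr n c k (3 * m + 2) = Pr n.+1 (~~ c) (2 * q * k - q) (2 * m + 1).
Proof.
rewrite /Pr tm32 !modE hP; congr (_ && _).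
  by case: (tm _); case: c.
have := congA _ _ k 2 m hd; rewrite -/P PoszD PoszM PoszD PoszM => ->.
move: hd => /dvdzP[u hu].
apply/dvdzP/dvdzP => -[x hx].
  exists (x - u); lia.
exists (x + u); lia.
Qed.

Lemma F1 m c' : Pr n.+1 c' (2 * q * k) (2 * m + 1) = false.
Proof.
rewrite /Pr modE hP PoszD PoszM andbC; apply/negbTE/negP => /andP[/dvdzP[x hx] _]; lia.
Qed.

Lemma F3 m c' : Pr n.+1 c' (2 * q * k - 2 * q) (2 * m + 1) = false.
Proof.
rewrite /Pr modE hP PoszD PoszM andbC; apply/negbTE/negP => /andP[/dvdzP[x hx] _]; lia.
Qed.

Lemma F2 m c' : Pr n.+1 c' (2 * q * k - q) (2 * m) = false.
Proof.
move: hd => /dvdzP[u hu].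
rewrite /Pr modE hP PoszM andbC; apply/negbTE/negP => /andP[/dvdzP[x hx] _]; lia.
Qed.

Lemma count_blocks M :
  count (Pr n c k) (iota 0 (3 * M)) =
  (count (Pr n.+1 c (2 * q * k)) (iota 0 (2 * M)) +
   count (Pr n.+1 (~~ c) (2 * q * k - q)) (iota 0 (2 * M)) +
   count (Pr n.+1 c (2 * q * k - 2 * q)) (iota 0 (2 * M)))%N.
Proof.
elim: M => [|M IH] //.
have -> : (3 * M.+1 = 3 * M + 3)%N by lia.
have -> : (2 * M.+1 = 2 * M + 2)%N by lia.
rewrite (iotaD 0 (3 * M)) (iotaD 0 (2 * M)) !count_cat IH !add0n.
have -> : iota (3 * M) 3 = [:: 3 * M; 3 * M + 1; 3 * M + 2]%N by rewrite /= addn1 addn2.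
have -> : iota (2 * M) 2 = [:: 2 * M; 2 * M + 1]%N by rewrite /= addn1.
rewrite /= L1 L2 L3 F1 F2 F3 /=.
lia.
Qed.
End Blocks.

Lemma count_iota_le (p : pred nat) {a b} : (a <= b)%N ->
  (count p (iota 0 a) <= count p (iota 0 b) <= count p (iota 0 a) + (b - a))%N.
Proof.
move=> ab; rewrite -(subnKC ab) iotaD count_cat add0n addKn leq_addr leq_add2l.
by apply: leq_trans (count_size _ _) _; rewrite size_iota.
Qed.

Lemma natR_le {R : realType} {a b : nat} : (a <= b)%N -> (a%:R <= b%:R :> R).
Proof. by rewrite ler_nat. Qed.

Section Key.
Variable R : realType.

Lemma key n c k (q : int) (a : R) : (3 * q == 1 %[mod (2 ^ n.+1)%:Z])%Z -> 0 <= a ->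
  `| (Ccount n c k a)%:R - ((Ccount n.+1 c (2 * q * k) (2 / 3 * a))%:R
      + (Ccount n.+1 (~~ c) (2 * q * k - q) (2 / 3 * a))%:R
      + (Ccount n.+1 c (2 * q * k - 2 * q) (2 / 3 * a))%:R) | <= 6 :> R.
Proof.
move=> hq a0.
have a0' : 0 <= 2 / 3 * a by rewrite mulr_ge0.
have [m hm] := ex_m _ _ a0; have [m' hm'] := ex_m _ _ a0'.
have [b1 b2] := m_bounds _ _ _ a0 hm; have [b3 b4] := m_bounds _ _ _ a0' hm'.
rewrite !(Ccount_m _ _ _ _ _ a0 hm) !(Ccount_m _ _ _ _ _ a0' hm').
set M := (m %/ 3)%N.
have h1 : (3 * M <= m)%N by rewrite /M; lia.
have h2 : (m <= 3 * M + 2)%N by rewrite /M; lia.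
have r1 := natR_le (R:=R) h1; have r2 := natR_le (R:=R) h2.
rewrite ?natrD ?natrM in r1 r2.
have h3 : (2 * M <= m')%N.
  rewrite leqNgt; apply/negP => hlt.
  have : (m'.+1 <= 2 * M)%N by [].
  move/(natR_le (R:=R)); rewrite -addn1 natrD natrM => r; lra.
have h4 : (m' <= 2 * M + 2)%N.
  rewrite leqNgt; apply/negP => hlt.
  have : (2 * M + 3 <= m')%N by lia.
  move/(natR_le (R:=R)); rewrite natrD natrM => r; lra.
have := @count_blocks n q k c hq M.
have /andP[f1 f2] := count_iota_le (Pr n c k) h1.
have /andP[g1 g2] := count_iota_le (Pr n.+1 c (2 * q * k)) h3.
have /andP[g3 g4] := count_iota_le (Pr n.+1 (~~ c) (2 * q * k - q)) h3.
have /andP[g5 g6] := count_iota_le (Pr n.+1 c (2 * q * k - 2 * q)) h3.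
have e1 : (m - 3 * M <= 2)%N by lia.
have e2 : (m' - 2 * M <= 2)%N by lia.
move=> E.
set F := count _ (iota 0 m) in f1 f2 *.
set G1 := count _ (iota 0 m') in g1 g2 *.
set G2 := count _ (iota 0 m') in g3 g4 *.
set G3 := count _ (iota 0 m') in g5 g6 *.
have u1 : (F <= G1 + G2 + G3 + 2)%N by lia.
have u2 : (G1 + G2 + G3 <= F + 6)%N by lia.
move/(natR_le (R:=R)): u1; move/(natR_le (R:=R)): u2; rewrite !natrD => u2 u1.
rewrite ler_norml; apply/andP; split; lra.
Qed.
End Key.

Lemma modzk (i P : nat) (k : int) : (0 < P)%N ->
  (i%:Z == k %[mod P%:Z])%Z = (i %% P == `|(k %% P%:Z)%Z|%N)%N.
Proof.
move=> P0; rewrite modz_nat.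
have : 0 <= (k %% P%:Z)%Z by apply: modz_ge0; rewrite eqz_nat -lt0n.
by case: (k %% P%:Z)%Z.
Qed.

Lemma block (P k' a : nat) : (k' < P)%N ->
  count (fun i => i %% P == k')%N (iota a P) = 1%N.
Proof.
move=> kP; elim: a => [|a IH].
  rewrite (@eq_in_count _ _ (pred1 k')); last first.
    by move=> i; rewrite mem_iota add0n /= => h; rewrite modn_small.
  by rewrite count_uniq_mem ?iota_uniq // mem_iota kP.
have P0 : (0 < P)%N by lia.
move: IH; case: P kP P0 => [//|P'] kP P0.
have e2 : iota a.+1 P'.+1 = iota a.+1 P' ++ [:: a.+1 + P']%N by rewrite -[P'.+1]addn1 iotaD.
have e3 : ((a.+1 + P') %% P'.+1 = a %% P'.+1)%N by rewrite addSnnS modnDr.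
rewrite e2 count_cat /= e3 addn0 /= => IH.
by rewrite addnC.
Qed.

Lemma count_full (P k' B : nat) : (k' < P)%N ->
  count (fun i => i %% P == k')%N (iota 0 (P * B)) = B.
Proof.
move=> kP; elim: B => [|B IH]; first by rewrite muln0.
have -> : (P * B.+1 = P * B + P)%N by lia.
by rewrite iotaD count_cat IH add0n block // addn1.
Qed.

Lemma count_split (p b : pred nat) s :
  (count (fun i => (b i == false) && p i) s + count (fun i => (b i == true) && p i) s = count p s)%N.
Proof.
elim: s => //= x s IH; rewrite -IH; case: (b x); case: (p x) => /=; lia.
Qed.

Lemma sum01 {R : realType} n k (a : R) : 0 <= a ->
  `| (Ccount n false k a)%:R + (Ccount n true k a)%:R - a / (2 ^+ n) | <= 2.
Proof.
move=> a0; have [m hm] := ex_m _ _ a0; have [b1 b2] := m_bounds _ _ _ a0 hm.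
rewrite !(Ccount_m _ _ _ _ _ a0 hm) -natrD /Pr.
rewrite (count_split (fun i : nat => (i%:Z == k %[mod (2 ^ n)%:Z])%Z) tm).
set P := (2 ^ n)%N.
have P0 : (0 < P)%N by rewrite expn_gt0.
set k' := `|(k %% P%:Z)%Z|%N.
have kP : (k' < P)%N.
  rewrite /k' -(ltz_nat) gez0_abs ?ltz_pmod //; last by apply: modz_ge0; rewrite eqz_nat -lt0n.
rewrite (eq_count (a2 := fun i => i %% P == k')%N); last by move=> i; rewrite modzk.
set B := (m %/ P)%N.
have h1 : (P * B <= m)%N by rewrite /B mulnC leq_trunc_div.
have h2 : (m <= P * B.+1)%N.
  by rewrite /B mulnC; apply: ltnW; rewrite ltn_ceil.
have /andP[c1 _] := count_iota_le (fun i => i %% P == k')%N h1.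
have /andP[c2 _] := count_iota_le (fun i => i %% P == k')%N h2.
rewrite !count_full // in c1 c2.
set h := count _ _ in c1 c2 *.
have pR : (2 : R) ^+ n = P%:R by rewrite /P natrX.
rewrite pR.
have p1 : 1 <= P%:R :> R by rewrite ler1n.
have p0 : 0 < P%:R :> R by lra.
have r1 := natR_le (R:=R) h1; have r2 := natR_le (R:=R) h2.
have r3 := natR_le (R:=R) c1; have r4 := natR_le (R:=R) c2.
rewrite !natrM in r1 r2.
have y1 : B%:R <= m%:R / P%:R :> R by rewrite ler_pdivlMr // mulrC.
have y2 : m%:R / P%:R <= B.+1%:R :> R by rewrite ler_pdivrMr // mulrC.
have z1 : a / P%:R <= m%:R / P%:R by rewrite ler_pM2r ?invr_gt0.
have z2 : m%:R / P%:R - a / P%:R <= 1.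
  by rewrite -mulrBl ler_pdivrMr // mul1r; lra.
rewrite -natr1 in y2 r4.
rewrite ler_norml; apply/andP; split; lra.
Qed.

Lemma bnd_of {R : realType} (f : nat -> R) (B : R) : (forall x, `|f x| <= B) -> bounded_fun f.
Proof.
move=> H; rewrite /= /bounded_near.
near=> M => x _ /=; apply: le_trans (H x) _; near: M; apply: nbhs_pinfty_ge; exact: num_real.
Unshelve. all: end_near. Qed.

Lemma cvg_sub {R : realType} (u v : nat -> R) (l : R) T0 :
  (forall t, (T0 <= t)%N -> exists y, (t <= y)%N /\ v t = u y) ->
  u @ \oo --> l -> v @ \oo --> l.
Proof.
move=> H hu A HA; case: (hu A HA) => M _ HM.
exists (maxn M T0) => // t /=; rewrite geq_max => /andP[h1 h2].
have [y [ty ->]] := H t h2; apply: HM => /=; exact: leq_trans ty.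
Qed.

Lemma err0 {R : realType} (e : nat -> R) (d : nat -> nat) (K : R) :
  (forall t, (t <= d t)%N) -> 0 <= K ->
  (forall t, (0 < t)%N -> `|e t| <= K / (d t)%:R) -> e @ \oo --> 0.
Proof.
move=> hd K0 H; apply/cvgrPdist_lt => eps e0.
exists (Num.truncn (K / eps)).+1 => // t /= Nt.
have t0 : (0 < t)%N by apply: leq_trans Nt.
rewrite sub0r normrN; apply: le_lt_trans (H t t0) _.
have dt : (0 < d t)%N by apply: leq_trans (hd t).
have dR : 0 < (d t)%:R :> R by rewrite ltr0n.
rewrite ltr_pdivrMr //.
have h1 : K / eps < (d t)%:R.
  apply: lt_le_trans (truncnS_gt _) _; rewrite ler_nat; exact: leq_trans Nt (hd t).
by rewrite -ltr_pdivrMl // mulrC.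
Qed.

Fixpoint Sq (g : nat -> nat) (F : nat * (nat -> nat) -> nat -> nat) (j : nat) : nat -> nat :=
  match j with 0 => g | j'.+1 => Sq g F j' \o F (j', Sq g F j') end.

Definition sincr (f : nat -> nat) := forall x, (f x < f x.+1)%N.

Lemma sincr_lt f : sincr f -> forall x y, (x < y)%N -> (f x < f y)%N.
Proof.
move=> hf x y; elim: y => [//|y IH]; rewrite ltnS leq_eqVlt => /orP[/eqP->|/IH h].
  exact: hf.
exact: ltn_trans h (hf y).
Qed.

Lemma sincr_ge f : sincr f -> forall x, (x <= f x)%N.
Proof. by move=> hf; elim=> [//|x IH]; apply: leq_ltn_trans IH (hf x). Qed.

Section Diag.
Variables (g : nat -> nat) (F : nat * (nat -> nat) -> nat -> nat).
Hypothesis hg : sincr g.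
Hypothesis hF : forall p, sincr (F p).

Lemma Sq_incr j : sincr (Sq g F j).
Proof.
elim: j => [//|j IH] x /=; apply: sincr_lt => //; exact: hF.
Qed.

Lemma Sq_sub t i : (i <= t)%N -> forall x, exists y, (x <= y)%N /\ Sq g F t x = Sq g F i y.
Proof.
elim: t => [|t IH].
  by rewrite leqn0 => /eqP-> x; exists x.
rewrite leq_eqVlt => /orP[/eqP->|]; first by move=> x; exists x.
rewrite ltnS => /IH H x /=.
have [y [h1 h2]] := H (F (t, Sq g F t) x).
exists y; split => //; apply: leq_trans h1; exact: sincr_ge.
Qed.

Definition Dg t := Sq g F t t.

Lemma Dg_incr : sincr Dg.
Proof.
move=> t; rewrite /Dg /=; apply: sincr_lt; first exact: Sq_incr.
exact: (sincr_ge _ (hF (t, Sq g F t)) t.+1).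
Qed.

Lemma Dg_in t : exists y, Dg t = g y.
Proof. by have [y [_ e]] := Sq_sub t 0 (leq0n t) t; exists y; rewrite /Dg e. Qed.
End Diag.

Definition rr {R : realType} n c k (x : nat) : R :=
  (Ccount n c k ((2 / 3 : R) ^+ n * x%:R))%:R / ((2 / 3 : R) ^+ n * x%:R).

Definition sq {R : realType} (j x : nat) : R :=
  match (unpickle j : option (nat * bool * int)) with
  | Some (n, c, k) => rr n c k x
  | None => 0 end.

Lemma w_gt0 {R : realType} n : 0 < (2 / 3 : R) ^+ n.
Proof. by apply: exprn_gt0; rewrite divr_gt0. Qed.

Lemma rr_bound {R : realType} n c k : exists B : R, forall x, `|rr n c k x| <= B.
Proof.
set w := (2 / 3 : R) ^+ n.
have w0 : 0 < w := w_gt0 n.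
exists (1 + w^-1) => x.
have B0 : 0 <= 1 + w^-1 by rewrite addr_ge0 // invr_ge0 ltW.
rewrite /rr -/w.
case: x => [|x]; first by rewrite mulr0 invr0 mulr0 normr0.
set a := w * x.+1%:R.
have a0 : 0 < a by rewrite mulr_gt0 // ltr0n.
have [m hm] := ex_m _ _ (ltW a0); have [_ b2] := m_bounds _ _ _ (ltW a0) hm.
rewrite (Ccount_m _ _ _ _ _ (ltW a0) hm).
have cm : (count (Pr n c k) (iota 0 m) <= m)%N by apply: leq_trans (count_size _ _) _; rewrite size_iota.
have := natR_le (R:=R) cm => cmR.
rewrite ger0_norm; last by rewrite divr_ge0 // ltW.
rewrite ler_pdivrMr //.
have -> : (1 + w^-1) * a = a + x.+1%:R by rewrite /a mulrDl mul1r mulrA mulVf ?mul1r // gt_eqF.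
have : 1 <= x.+1%:R :> R by rewrite ler1n.
lra.
Qed.

Lemma sq_bound {R : realType} j : exists B : R, forall x, `|sq j x| <= B.
Proof.
rewrite /sq; case: (unpickle j) => [[[n c] k]|]; first exact: rr_bound.
by exists 0 => x; rewrite normr0.
Qed.

Lemma Ccount_per {R : realType} n c k (a : R) :
  Ccount n c (k + (2 ^ n)%:Z) a = Ccount n c k a.
Proof.
rewrite /Ccount; apply: eq_count => i /=; congr [&& _, _ & _].
by rewrite modzDr.
Qed.


Lemma part3 {R : realType} (D : nat -> nat) (Dge : forall t, (t <= D t)%N) n c k (q : int)
  (l0 l1 l2 l3 : R) : (3 * q == 1 %[mod (2 ^ n.+1)%:Z])%Z ->
  (fun t => @rr R n c k (D t)) @ \oo --> l0 ->
  (fun t => @rr R n.+1 c (2 * q * k) (D t)) @ \oo --> l1 ->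
  (fun t => @rr R n.+1 (~~ c) (2 * q * k - q) (D t)) @ \oo --> l2 ->
  (fun t => @rr R n.+1 c (2 * q * k - 2 * q) (D t)) @ \oo --> l3 ->
  3 / 2 * l0 = l1 + l2 + l3.
Proof.
move=> hq c0 c1 c2 c3.
set w := (2 / 3 : R) ^+ n.
have w0 : 0 < w := w_gt0 n.
pose w1 := fun t => @rr R n c k (D t).
pose z := fun t => 2 / 3 * (@rr R n.+1 c (2 * q * k) (D t) + @rr R n.+1 (~~ c) (2 * q * k - q) (D t)
   + @rr R n.+1 c (2 * q * k - 2 * q) (D t)).
have E : forall t, `|w1 t - z t| <= 6 * w^-1 / (D t)%:R.
  move=> t.
  have e : (2 / 3 : R) ^+ n.+1 * (D t)%:R = 2 / 3 * (w * (D t)%:R) by rewrite exprS mulrA.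
  rewrite /w1 /z /rr e -/w.
  set a := w * (D t)%:R.
  have a0 : 0 <= a by rewrite mulr_ge0 // ltW.
  have K := @key R n c k q a hq a0.
  have -> : 6 * w^-1 / (D t)%:R = 6 / a by rewrite /a invfM mulrA.
  have [ea|an0] := eqVneq a 0.
    by rewrite ea !mulr0 !invr0 !mulr0 !addr0 mulr0 subr0 normr0.
  move: K.
  set C := (Ccount n c k a)%:R.
  set C1 := (Ccount n.+1 c _ _)%:R.
  set C2 := (Ccount n.+1 (~~ c) _ _)%:R.
  set C3 := (Ccount n.+1 c (2 * q * k - 2 * q) _)%:R.
  move=> K.
  have -> : C / a - 2 / 3 * (C1 / (2 / 3 * a) + C2 / (2 / 3 * a) + C3 / (2 / 3 * a))
       = (C - (C1 + C2 + C3)) / a by field; rewrite an0.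
  rewrite normrM normfV (ger0_norm a0).
  by apply: ler_wpM2r => //; rewrite invr_ge0.
have err : (fun t => w1 t - z t) @ \oo --> 0.
  apply: (err0 _ D (6 * w^-1) Dge); first by rewrite mulr_ge0 // invr_ge0 ltW.
  by move=> t _; exact: E.
have cz : z @ \oo --> 2 / 3 * (l1 + l2 + l3).
  exact: (cvgM (cvg_cst _) (cvgD (cvgD c1 c2) c3)).
have cw : w1 @ \oo --> 2 / 3 * (l1 + l2 + l3) + 0.
  have -> : w1 = (fun t => z t + (w1 t - z t)) by apply: funext => t; rewrite addrC subrK.
  exact: (cvgD cz err).
have := cvg_unique (@Rhausdorff R) c0 cw.
by rewrite addr0 => ->; field.
Qed.


Lemma part4 {R : realType} (D : nat -> nat) (Dge : forall t, (t <= D t)%N) n k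
  (l0 l1 : R) :
  (fun t => @rr R n false k (D t)) @ \oo --> l0 ->
  (fun t => @rr R n true k (D t)) @ \oo --> l1 ->
  l0 + l1 = (2 ^+ n)^-1.
Proof.
move=> c0 c1.
set w := (2 / 3 : R) ^+ n.
have w0 : 0 < w := w_gt0 n.
have p0 : (2 : R) ^+ n != 0 by rewrite expf_neq0.
pose v := fun t => @rr R n false k (D t) + @rr R n true k (D t).
have E : forall t, (0 < t)%N -> `|v t - (2 ^+ n)^-1| <= 2 * w^-1 / (D t)%:R.
  move=> t t0; rewrite /v /rr -/w.
  set a := w * (D t)%:R.
  have a0 : 0 < a by rewrite mulr_gt0 // ltr0n; apply: leq_trans (Dge t).
  have K := @sum01 R n k a (ltW a0).
  have -> : 2 * w^-1 / (D t)%:R = 2 / a by rewrite /a invfM mulrA.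
  move: K.
  set C0 := (Ccount n false k a)%:R.
  set C1 := (Ccount n true k a)%:R.
  move=> K.
  have -> : C0 / a + C1 / a - (2 ^+ n)^-1 = (C0 + C1 - a / 2 ^+ n) / a.
    by field; rewrite p0 gt_eqF.
  rewrite normrM normfV (ger0_norm (ltW a0)).
  by apply: ler_wpM2r => //; rewrite invr_ge0 ltW.
have err : (fun t => v t - (2 ^+ n)^-1) @ \oo --> 0.
  apply: (err0 _ D (2 * w^-1) Dge); first by rewrite mulr_ge0 // invr_ge0 ltW.
  exact: E.
have cv : v @ \oo --> l0 + l1 by exact: (cvgD c0 c1).
have cv2 : v @ \oo --> ((2 : R) ^+ n)^-1 + 0.
  have -> : v = (fun t => (2 ^+ n)^-1 + (v t - (2 ^+ n)^-1)).
    by apply: funext => t; rewrite addrC subrK.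
  exact: (cvgD (cvg_cst _) err).
have -> : ((2 : R) ^+ n)^-1 = ((2 : R) ^+ n)^-1 + 0 by rewrite addr0.
exact: (cvg_unique (@Rhausdorff R) cv cv2).
Qed.

Theorem lemma19 (R : realType) (Lambda : set nat) :
  ~ finite_set Lambda ->
  exists N : nat -> nat,
    (forall t, Lambda (N t)) /\ (forall t, (N t < N t.+1)%N) /\
    exists mu : nat -> bool -> int -> R,
      (forall n c k,
        (fun t => (Ccount n c k ((2 / 3 : R) ^+ n * (N t)%:R))%:R
                    / ((2 / 3 : R) ^+ n * (N t)%:R)) @ \oo --> mu n c k) /\
      (forall n c k, mu n c (k + (2 ^ n)%:Z)%R = mu n c k) /\
      (forall n c k (q : int), (3 * q == 1 %[mod (2 ^ n.+1)%:Z])%Z ->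
         3 / 2 * mu n c k =
           mu n.+1 c (2 * q * k)%R + mu n.+1 (~~ c) (2 * q * k - q)%R
           + mu n.+1 c (2 * q * k - 2 * q)%R) /\
      (forall n k, mu n false k + mu n true k = (2 ^+ n)^-1).
Proof.
move=> hinf.
have fin : forall x : nat, finite_set [set y : nat | (y <= x)%N].
  by move=> n; apply: sub_finite_set (finite_II n.+1) => m /=.
have [g [gi _ gL]] := @infinite_increasing_seq_wf _ nat Lambda fin hinf 0%N.
have hg : sincr g by move=> x; have := (increasing_seqP g).2 gi x.
have BW : forall p : nat * (nat -> nat), exists f, sincr f /\ cvgn ((@sq R p.1) \o (p.2 \o f)).
  case=> j S /=; have [B hB] := sq_bound (R:=R) j.
  have [f fi fc] := bolzano_weierstrass (bnd_of (sq j \o S) B (fun x => hB (S x))).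
  exists f; split => //; by move=> x; have := (increasing_seqP f).2 fi x.
have [F hF] := choice BW.
have Fi : forall p, sincr (F p) by move=> p; case: (hF p).
set D := Dg g F.
have Dge : forall t, (t <= D t)%N by apply: sincr_ge; exact: Dg_incr.
exists D; split.
  by move=> t; have [y e] := Dg_in g F Fi t; rewrite /D e; exact: gL.
split; first exact: Dg_incr.
exists (fun n c k => lim ((fun t => @rr R n c k (D t)) @ \oo)).
have conv : forall n c k, (fun t => @rr R n c k (D t)) @ \oo --> lim ((fun t => @rr R n c k (D t)) @ \oo).
  move=> n c k; set j := pickle (n, c, k).
  have sqj : @sq R j = rr n c k by rewrite /sq pickleK.
  apply: cvgP; rewrite -sqj.
  have [_ hc] := hF (j, Sq g F j).
  apply: (cvg_sub _ _ _ j.+1 _ hc) => t jt.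
  have [y [ty e]] := Sq_sub g F Fi t j.+1 jt t.
  by exists y; split => //=; rewrite /D /Dg e.
split; first exact: conv.
split.
  move=> n c k; congr lim; congr (_ @ \oo); apply: funext => t.
  by rewrite /rr Ccount_per.
split.
  move=> n c k q hq; apply: (@part3 R D Dge n c k q _ _ _ _ hq); exact: conv.
move=> n k; apply: (@part4 R D Dge n k); exact: conv.
Qed.
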